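(* Let $R\subseteq S$ be integral domains and let $\mathbf A$ be a matrix with entries in $R$. Then $\mathbf A$ satisfies the columns condition as a matrix with entries in $R$ if and only if it satisfies the columns condition as a matrix with entries in $S$.
   Context: Columns condition: for a $k\times l$ matrix over a domain $D$ with fraction field $K$ and columns $\mathbf c_1,\dots,\mathbf c_l\in D^k$, it holds if there exist an integer $m\ge0$ and a partition $\{1,\dots,l\}=I_0\cup\dots\cup I_m$ such that $\sum_{i\in I_0}\mathbf c_i=0$ and for each $t\in\{1,\dots,m\}$, $\sum_{i\in I_t}\mathbf c_i$ lies in the $K$-vector space spanned by the $\mathbf c_j$ with $j\in I_0\cup\dots\cup I_{t-1}$. *)

(* Defs.v *)
From HB Require Import structures.
From mathcomp Require Import all_boot all_order all_algebra.
Set Implicit Arguments. Unset Strict Implicit. Unset Printing Implicit Defensive.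
Import Order.TTheory GRing.Theory Num.Theory.
Local Open Scope ring_scope.

(* The partition {1..l} = I_0 u ... u I_m is given by a block-index map
   p : 'I_l -> 'I_(m.+1); I_t = [set i | p i == t]. *)
Definition columns_condition (D : idomainType) (k l : nat) (A : 'M[D]_(k, l)) : Prop :=
  exists (m : nat) (p : 'I_l -> 'I_m.+1),
    (\sum_(i < l | p i == ord0) col i A = 0) /\
    (forall t : 'I_m.+1, t != ord0 ->
       exists a : 'I_l -> {fraction D},
         map_mx (@FracField.tofrac D) (\sum_(i < l | p i == t) col i A)
         = \sum_(j < l | (p j < t)%N) a j *: map_mx (@FracField.tofrac D) (col j A)).

(* Main.v *)
Require Import Defs.
From HB Require Import structures.
From mathcomp Require Import all_boot all_order all_algebra.
From mathcomp Require Import ring.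
Import GRing.Theory.
Local Open Scope ring_scope.

Lemma divB_gen (F : fieldType) (x y u v : F) : u != 0 -> v != 0 ->
  x / u - y / v = (x * v - y * u) / (u * v).
Proof. move=> u0 v0; field; by rewrite u0 v0. Qed.
Lemma divM_gen (F : fieldType) (x y u v : F) : u != 0 -> v != 0 ->
  x / u * (y / v) = (x * y) / (u * v).
Proof. move=> u0 v0; field; by rewrite u0 v0. Qed.

Section FracMorph.
Local Open Scope quotient_scope.

Lemma pi_ratio (R : idomainType) (r : {ratio R}) :
  (\pi_({fraction R}) r) = FracField.tofrac r.1 / FracField.tofrac r.2.
Proof.
unlock FracField.tofrac. rewrite /GRing.inv /GRing.mul /=. rewrite !piE.
have d0 := denom_ratioP r.
rewrite /FracField.mulf /FracField.invf /= !numer_Ratio ?oner_neq0 //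
  !denom_Ratio ?oner_neq0 //.
apply/eqmodP => /=. rewrite FracField.equivfE /= !numer_Ratio ?mul1r ?oner_neq0 //
  !denom_Ratio ?mul1r ?oner_neq0 //.
by rewrite mulr1 mulrC.
Qed.

Variables (R S : idomainType) (f : {rmorphism R -> S}).
Hypothesis f_inj : injective f.
Local Notation tf := (@FracField.tofrac R).
Local Notation tf' := (@FracField.tofrac S).

Lemma frac_ex (x : {fraction R}) : exists n d, d != 0 /\ x = tf n / tf d.
Proof.
exists (repr x).1, (repr x).2; split; first exact: denom_ratioP.
by rewrite -pi_ratio reprK.
Qed.

Definition phi (x : {fraction R}) : {fraction S} :=
  tf' (f (repr x).1) / tf' (f (repr x).2).

Lemma fnz d : d != 0 -> f d != 0.
Proof. by move=> d0; apply: contra d0 => /eqP; rewrite -(rmorph0 f) => /f_inj ->. Qed.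
#[global] Arguments fnz {d}.

Lemma tfnz (D : idomainType) (d : D) : d != 0 -> FracField.tofrac d != 0.
Proof. by rewrite tofrac_eq0. Qed.
#[global] Arguments tfnz {D d}.

Lemma phiE n d : d != 0 -> phi (tf n / tf d) = tf' (f n) / tf' (f d).
Proof.
move=> d0; rewrite /phi.
set r := repr _.
have r0 := denom_ratioP r.
have e : tf n / tf d = tf r.1 / tf r.2 by rewrite -pi_ratio reprK.
move/eqP: e; rewrite eqr_div ?tfnz // -!rmorphM tofrac_eq => /eqP e.
apply/eqP; rewrite eqr_div ?tfnz ?fnz // -!(rmorphM tf') tofrac_eq -!(rmorphM f) e.
by [].
Qed.

Lemma phi_tf n : phi (tf n) = tf' (f n).
Proof.
have := phiE n 1 (oner_neq0 R); by rewrite !rmorph1 !divr1.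
Qed.

Lemma phi_is_zmod : zmod_morphism phi.
Proof.
move=> x y.
have [a [b [b0 ->]]] := frac_ex x.
have [c [e [e0 ->]]] := frac_ex y.
have be0 : b * e != 0 by rewrite mulf_neq0.
have Hb := tfnz b0. have He := tfnz e0.
have Hb' := tfnz (fnz b0). have He' := tfnz (fnz e0).
have E : tf a / tf b - tf c / tf e = tf (a * e - c * b) / tf (b * e).
  by rewrite rmorphB !rmorphM divB_gen.
rewrite E.
by rewrite !phiE // rmorphB !rmorphM rmorphB !rmorphM divB_gen.
Qed.

Lemma phi_is_monoid : monoid_morphism phi.
Proof.
split; first by rewrite -(rmorph1 tf) phi_tf !rmorph1.
move=> x y.
have [a [b [b0 ->]]] := frac_ex x.
have [c [e [e0 ->]]] := frac_ex y.
have be0 : b * e != 0 by rewrite mulf_neq0.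
have Hb := tfnz b0. have He := tfnz e0.
have Hb' := tfnz (fnz b0). have He' := tfnz (fnz e0).
have E : tf a / tf b * (tf c / tf e) = tf (a * c) / tf (b * e).
  by rewrite !rmorphM divM_gen.
rewrite E.
by rewrite !phiE // !rmorphM divM_gen.
Qed.

HB.instance Definition _ := GRing.isZmodMorphism.Build _ _ phi phi_is_zmod.
HB.instance Definition _ := GRing.isMonoidMorphism.Build _ _ phi phi_is_monoid.

End FracMorph.

Section Span.
Definition spanP (F : fieldType) k l (v : 'cV[F]_k) (M : 'M[F]_(k, l))
  (P : pred 'I_l) := exists a : 'I_l -> F, v = \sum_(j < l | P j) a j *: col j M.

#[global] Arguments spanP {F k l}.

Definition Bm (F : fieldType) k l (M : 'M[F]_(k, l)) (P : pred 'I_l) : 'M[F]_(l, k) :=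
  \matrix_(j, i) (if P j then M i j else 0).

#[global] Arguments Bm {F k l}.

Lemma spanE (F : fieldType) k l (v : 'cV[F]_k) (M : 'M[F]_(k, l)) P :
  spanP v M P <-> (v^T <= Bm M P)%MS.
Proof.
have key : forall u : 'rV_l, u *m Bm M P = (\sum_(j < l | P j) u 0 j *: col j M)^T.
  move=> u; rewrite mulmx_sum_row (big_mkcond P) /= linear_sum /=.
  apply: eq_bigr => j _; case: ifP => Pj.
    rewrite linearZ /=; congr (_ *: _); apply/matrixP => a b; rewrite !mxE Pj //.
  apply/matrixP => a b; rewrite !mxE /= Pj mulr0 //.
split.
  move=> [a ->]; apply/submxP; exists (\row_j a j); rewrite key.
  by congr (_^T); apply: eq_bigr => j _; rewrite mxE.
move/submxP => [u eu]; exists (fun j => u 0 j).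
by rewrite -[v]trmxK eu key trmxK.
Qed.

Lemma span_map (F F' : fieldType) (g : {rmorphism F -> F'}) k l
  (v : 'cV[F]_k) (M : 'M[F]_(k, l)) P :
  spanP (map_mx g v) (map_mx g M) P <-> spanP v M P.
Proof.
rewrite !spanE.
have -> : Bm (map_mx g M) P = map_mx g (Bm M P).
  by apply/matrixP => i j; rewrite !mxE; case: (P i); rewrite ?rmorph0.
by rewrite map_trmx map_submx.
Qed.
End Span.

Lemma cc_iff (D : idomainType) k l (A : 'M[D]_(k, l)) :
  columns_condition A <->
  exists (m : nat) (p : 'I_l -> 'I_m.+1),
    (\sum_(i < l | p i == ord0) col i A = 0) /\
    (forall t : 'I_m.+1, t != ord0 ->
       spanP (\sum_(i < l | p i == t) col i (map_mx (@FracField.tofrac D) A))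
             (map_mx (@FracField.tofrac D) A) (fun j => (p j < t)%N)).
Proof.
have E1 : forall (P : pred 'I_l), map_mx (@FracField.tofrac D) (\sum_(i < l | P i) col i A)
   = \sum_(i < l | P i) col i (map_mx (@FracField.tofrac D) A).
  by move=> P; rewrite map_mx_sum; apply: eq_bigr => i _; rewrite map_col.
split; move=> [m [p [h0 ht]]]; exists m, p; split => // t /ht [a ea]; exists a.
  by rewrite -E1 ea; apply: eq_bigr => j _; rewrite map_col.
by rewrite E1 ea; apply: eq_bigr => j _; rewrite map_col.
Qed.

Theorem lemma3p1 (R S : idomainType) (f : {rmorphism R -> S}) (f_inj : injective f)
  (k l : nat) (A : 'M[R]_(k, l)) :
  columns_condition A <-> columns_condition (map_mx f A).
Proof.
rewrite !cc_iff.
set g := @phi R S f.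
have HA : map_mx (@FracField.tofrac S) (map_mx f A)
          = map_mx g (map_mx (@FracField.tofrac R) A).
  by apply/matrixP => i j; rewrite !mxE /g (@phi_tf R S f f_inj).
have Hs : forall (P : pred 'I_l), \sum_(i < l | P i) col i (map_mx f A)
     = map_mx f (\sum_(i < l | P i) col i A).
  by move=> P; rewrite map_mx_sum; apply: eq_bigr => i _; rewrite map_col.
have Ht : forall (P : pred 'I_l),
   \sum_(i < l | P i) col i (map_mx (@FracField.tofrac S) (map_mx f A))
   = map_mx g (\sum_(i < l | P i) col i (map_mx (@FracField.tofrac R) A)).
  by move=> P; rewrite HA map_mx_sum; apply: eq_bigr => i _; rewrite map_col.
split; move=> [m [p [h0 ht]]]; exists m, p; split.
- by rewrite Hs h0 map_mx0.
- by move=> t /ht; rewrite Ht HA span_map.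
- apply/matrixP => i j; move/matrixP: h0 => /(_ i j).
  rewrite Hs !mxE -(rmorph0 f); exact: f_inj.
- by move=> t /ht; rewrite Ht HA span_map.
Qed.
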